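(* Let $p\ge 2$, let $E_1,\dots,E_p$ be Banach spaces, $I$ a finite set, and for $k=1,\dots,p$ let $(d_i(k))_{i\in I}$ be elements of $E_k$ with $f_k=\sum_{i\in I}d_i(k)$. Let $(\varepsilon_i)_{i\in I}$ be independent random variables with $P(\varepsilon_i=1)=P(\varepsilon_i=-1)=1/2$ and put $S_k=\big(\mathbb E\|\sum_{i\in I}\varepsilon_id_i(k)\|^p\big)^{1/p}$. Then, in $E_1\widehat\otimes\cdots\widehat\otimes E_p$, $$\Big\|f_1\otimes\cdots\otimes f_p-\sum_{g\colon\{1,\dots,p\}\to I\ \text{injective}}d_{g(1)}(1)\otimes\cdots\otimes d_{g(p)}(p)\Big\|_\wedge\le\sum_{A\subset\{1,\dots,p\},\ |A|\le p-2}\ \prod_{k\in A}\|f_k\|\cdot\prod_{k\notin A}S_k\cdot(p-|A|)!\,.$$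
   Context: $E_1\widehat\otimes\cdots\widehat\otimes E_p$ denotes the projective tensor product of Banach spaces, with projective norm $\|\cdot\|_\wedge$. *)

(* Defs.v *)
From HB Require Import structures.
From mathcomp Require Import all_boot all_order all_algebra.
From mathcomp Require Import all_classical all_reals all_analysis.
Set Implicit Arguments. Unset Strict Implicit. Unset Printing Implicit Defensive.
Import Order.TTheory GRing.Theory Num.Theory.
Import numFieldNormedType.Exports.
Local Open Scope classical_set_scope.
Local Open Scope ring_scope.

Section ProjTensor.
Variables (R : realType) (p : nat) (E : 'I_p -> completeNormedModType R).

(* an elementary tensor x_1 (x) ... (x) x_p is given by the tuple of its factors *)
Definition etuple := forall k : 'I_p, E k.

Definition multilinear (phi : etuple -> R) : Prop :=
  forall (k : 'I_p) (x y z : etuple) (a : R),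
    (forall j : 'I_p, j != k -> x j = z j /\ y j = z j) ->
    z k = a *: x k + y k ->
    phi z = a * phi x + phi y.

(* a formal combination sum_j c_j (x_j^1 (x) ... (x) x_j^p) *)
Definition tcomb := seq (R * etuple).

(* two formal combinations define the same element of the algebraic tensor
   product E_1 (x) ... (x) E_p  (universal property: they agree on every
   p-linear form) *)
Definition tensor_eq (u v : tcomb) : Prop :=
  forall phi, multilinear phi ->
    \sum_(x <- u) x.1 * phi x.2 = \sum_(x <- v) x.1 * phi x.2.

(* projective norm: inf of sum_j prod_k ||x_j^k|| over all representations
   u = sum_j x_j^1 (x) ... (x) x_j^p.  For an element of the algebraic tensor
   product this coincides with its norm in the completed projective tensor
   product E_1 ^(x) ... ^(x) E_p. *)
Definition projnorm (u : tcomb) : R :=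
  inf [set r : R | exists s : seq etuple,
         tensor_eq u [seq (1, t) | t <- s] /\
         r = \sum_(t <- s) \prod_(k < p) `|t k|].

End ProjTensor.

Definition rsign (R : realType) (b : bool) : R := if b then 1 else -1.

(* (E || sum_i eps_i x_i ||^q)^(1/q) for independent symmetric +-1 variables
   eps_i, i in I: the joint law of (eps_i) is uniform on {-1,1}^I. *)
Definition rad_moment (R : realType) (V : normedModType R) (I : finType)
  (x : I -> V) (q : nat) : R :=
  ((#|{ffun I -> bool}|%:R)^-1 *
     \sum_(eps : {ffun I -> bool}) `|\sum_(i : I) rsign R (eps i) *: x i| ^+ q)
  `^ (q%:R^-1).

(* Main.v *)
Require Import Defs.
From HB Require Import structures.
From mathcomp Require Import all_boot all_order all_algebra all_fingroup.
From mathcomp Require Import all_classical all_reals all_analysis.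
From mathcomp Require Import ring lra zify.
Import Order.TTheory GRing.Theory Num.Theory.
Import numFieldNormedType.Exports.
Local Open Scope ring_scope.

Section Lin.
Variables (R : realType) (p : nat) (E : 'I_p -> completeNormedModType R).
Variable (phi : etuple E -> R).
Hypothesis Hphi : multilinear phi.

Lemma ml_upd (z : etuple E) k (a : R) (u v : E k) :
  phi (dfwith z k (a *: u + v)) = a * phi (dfwith z k u) + phi (dfwith z k v).
Proof.
apply: (Hphi k); last by rewrite !dfwithin.
by move=> j jk; rewrite !dfwithout // eq_sym.
Qed.

Lemma ml_upd0 (z : etuple E) k : phi (dfwith z k 0) = 0.
Proof.
have := ml_upd z k 1 0 0; rewrite scale1r addr0 mul1r.
by move=> H; apply: (addrI (phi (dfwith z k 0))); rewrite addr0 -H.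
Qed.

Lemma ml_upd_sum (T : Type) (r : seq T) (z : etuple E) k (a : T -> R) (u : T -> E k) :
  phi (dfwith z k (\sum_(t <- r) a t *: u t)) = \sum_(t <- r) a t * phi (dfwith z k (u t)).
Proof.
elim: r => [|t r IH]; first by rewrite !big_nil ml_upd0.
by rewrite !big_cons ml_upd IH.
Qed.

Lemma dfwith_self (z : etuple E) k : dfwith z k (z k) = z.
Proof.
apply: functional_extensionality_dep => j.
by case: dfwithP.
Qed.

End Lin.


Definition fupd (p : nat) (I : finType) (g : {ffun 'I_p -> I}) (km : 'I_p) (i : I) :
  {ffun 'I_p -> I} := [ffun k => if k == km then i else g k].

Arguments fupd {p I}.
Section Expand.
Variables (R : realType) (p : nat) (E : 'I_p -> completeNormedModType R).
Variable (phi : etuple E -> R).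
Hypothesis Hphi : multilinear phi.
Variables (I : finType) (c : 'I_p -> I -> R) (v : forall k, I -> E k).

Let S k := \sum_i c k i *: v k i.

Lemma expand_step (i0 : I) m : (m <= p)%N -> forall w : etuple E,
 phi (fun k : 'I_p => if (k < m)%N then S k else w k)
 = \sum_(g : {ffun 'I_p -> I} | [forall k : 'I_p, (m <= k)%N ==> (g k == i0)])
     (\prod_(k : 'I_p | (k < m)%N) c k (g k)) * phi (fun k : 'I_p => if (k < m)%N then v k (g k) else w k).
Proof.
elim: m => [_ w|m IH hm w].
  rewrite (big_pred1 [ffun=> i0]); last first.
    move=> g /=; apply/forallP/eqP => [H|->]; last by move=> k; rewrite ffunE eqxx.
    by apply/ffunP => k; rewrite ffunE; move: (H k) => /= /eqP.
  rewrite big_pred0 // mul1r; congr phi.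
have hmp : (m < p)%N by [].
set km := Ordinal hmp.
have E1 : (fun k : 'I_p => if (k < m.+1)%N then S k else w k) =
   dfwith (fun k : 'I_p => if (k < m)%N then S k else w k) km (S km).
  apply: functional_extensionality_dep => k.
  case: dfwithP => [|j /eqP nj]; first by rewrite /= ltnSn.
  rewrite ltnS leq_eqVlt.
  have -> : (val j == m) = false.
    by apply/negbTE/eqP => h; apply: nj; apply: val_inj.
  by [].
rewrite E1 /S ml_upd_sum //.
have E2 : forall i, dfwith (fun k : 'I_p => if (k < m)%N then S k else w k) km (v km i) =
   (fun k : 'I_p => if (k < m)%N then S k else dfwith w km (v km i) k).
  move=> i; apply: functional_extensionality_dep => k.
  case: dfwithP => [|j]; first by rewrite /= ltnn dfwithin.
  by move=> jk; case: ifP => // _; rewrite dfwithout // eq_sym.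
under eq_bigr => i _ do rewrite E2 (IH (ltnW hm)) mulr_sumr.
rewrite [RHS](partition_big (fun g : {ffun 'I_p -> I} => g km) xpredT) //=.
apply: eq_bigr => i _.
rewrite [RHS](reindex_onto (fun g : {ffun 'I_p -> I} => fupd g km i) (fun g : {ffun 'I_p -> I} => fupd g km i0)); last first.
  move=> g /andP [_ /eqP gi]; apply/ffunP => k; rewrite /fupd !ffunE.
  by case: eqP => // ->.
apply: eq_big => g.
  apply/idP/idP.
    move=> /forallP H.
    have gkm : g km = i0 by move: (H km) => /=; rewrite leqnn => /eqP.
    apply/andP; split; first (apply/andP; split); last first.
    - apply/eqP/ffunP => k; rewrite /fupd !ffunE; case: eqP => [->|] //.
    - by rewrite /fupd ffunE eqxx.
      apply/forallP => k; apply/implyP => hk; rewrite ffunE.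
      case: (k =P km) => [ek|_]; first by move: hk; rewrite ek /= ltnn.
      by move: (H k) => /implyP; apply; apply: ltnW.
  move=> /andP [/andP [/forallP H _] /eqP H2].
  apply/forallP => k; apply/implyP => hk.
  rewrite -H2 /fupd ffunE; have [ekm|nk] := eqVneq k km; first by [].
  have hk' : (m.+1 <= k)%N.
    rewrite ltn_neqAle hk andbT; apply/eqP => mk; move/eqP: nk; apply.
    by apply: val_inj.
  by move: (H k) => /implyP /(_ hk'); rewrite /fupd ffunE (negbTE nk).
move=> /forallP H.
have gkm : g km = i0 by move: (H km) => /=; rewrite leqnn => /eqP.
rewrite mulrA; congr (_ * _).
  symmetry; rewrite (bigD1 km) /=; last by rewrite ltnSn.
  rewrite /fupd !ffunE eqxx; congr (_ * _); apply: eq_big => k.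
    have [->|nk] := eqVneq k km; first by rewrite /= ltnn andbF.
    rewrite andbT ltnS leq_eqVlt.
    have -> : (val k == m) = false.
      by apply/negbTE; apply: contra nk => /eqP h; apply/eqP; apply: val_inj.
    by [].
  by move=> /andP [_ /negbTE nk]; rewrite ffunE nk.
congr phi; apply: functional_extensionality_dep => k.
rewrite /fupd ffunE; case: (k =P km) => [->|/eqP nk].
  by rewrite /= ltnSn ltnn dfwithin.
rewrite dfwithout; last by rewrite eq_sym.
have -> : (k < m.+1)%N = (k < m)%N.
  rewrite ltnS leq_eqVlt.
  have -> : (val k == m) = false.
    by apply/negbTE; apply: contra nk => /eqP h; apply/eqP; apply: val_inj.
  by [].
by [].
Qed.

Lemma ml_expand (p0 : (0 < p)%N) :
  phi (fun k => \sum_i c k i *: v k i) =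
  \sum_(g : {ffun 'I_p -> I}) (\prod_k c k (g k)) * phi (fun k => v k (g k)).
Proof.
case: (pickP (@predT I)) => [i0 _|noI].
  have := @expand_step i0 p (leqnn p) (fun k => S k).
  have E1 : (fun k : 'I_p => if (k < p)%N then S k else S k) = (fun k => S k).
    by apply: functional_extensionality_dep => k; rewrite ltn_ord.
  rewrite E1 /S => ->.
  apply: eq_big => [g|g _].
    by apply/forallP => k; rewrite leqNgt ltn_ord.
  congr (_ * _); first by apply: eq_bigl => k; rewrite ltn_ord.
  by congr phi; apply: functional_extensionality_dep => k; rewrite ltn_ord.
set k0 := Ordinal p0.
rewrite big_pred0; last by move=> g; have := noI (g k0).
have -> : (fun k => \sum_i c k i *: v k i) = dfwith (fun k => \sum_i c k i *: v k i) k0 0.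
  apply: functional_extensionality_dep => k.
  by case: dfwithP => //; rewrite big_pred0.
by rewrite ml_upd0.
Qed.
End Expand.


Lemma sign_sum (R : realType) (n : nat) (I : finType) (g : {ffun 'I_n -> I}) :
 \sum_(s : {perm 'I_n} | [forall j, g (s j) == g j]) ((-1) ^+ odd_perm s : R)
   = (injectiveb g)%:R.
Proof.
case: (injectiveP g) => [ginj|ninj].
  rewrite (big_pred1 1%g); first by rewrite odd_perm1.
  move=> s /=; apply/forallP/eqP => [H|->]; last by move=> j; rewrite perm1.
  by apply/permP => j; rewrite perm1; apply: ginj; apply/eqP.
have [a [b [ab gab]]] : exists a b, a != b /\ g a = g b.
  apply: contrapT => H; apply: ninj => x y gxy; apply: contrapT => nxy.
  by apply: H; exists x, y; split => //; apply/eqP.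
set t := tperm a b.
have gt : forall j, g (t j) = g j by move=> j; rewrite /t; case: tpermP => [->|->|]; rewrite ?gab.
set X := \sum_(s | _) _.
suff : X = - X by move=> H /=; lra.
rewrite {1}/X (reindex_inj (mulIg t)) /= -sumrN.
apply: eq_big => s.
  by apply/forallP/forallP => H j; move: (H j); rewrite permM gt.
by move=> _; rewrite odd_permM odd_tperm ab signr_addb mulrN1.
Qed.


Lemma card_setC_ord n (B : {set 'I_n}) : #|~: B| = (n - #|B|)%N.
Proof. by rewrite cardsCs finset.setCK card_ord. Qed.

Lemma amgm (R : realType) n (B : {set 'I_n}) (x : 'I_n -> R) : (0 < n)%N ->
  (forall k, k \in B -> 0 <= x k) ->
  \prod_(k in B) x k <= n%:R^-1 * (\sum_(k in B) x k ^+ n + (n - #|B|)%:R).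
Proof.
move=> n0 xge0.
pose y k := if k \in B then x k ^+ n else 1.
have := @leif_AGM R _ predT y.
rewrite card_ord => H; have {H} := (H _).1.
have yP : (\prod_(i in predT) y i) = (\prod_(k in B) x k) ^+ n.
  rewrite -prodrXl (bigID (mem B)) /= [X in _ * X]big1 ?mulr1; last first.
    by move=> k /negbTE kB; rewrite /y kB.
  by apply: eq_bigr => k kB; rewrite /y kB.
have yS : (\sum_(i in predT) y i) = \sum_(k in B) x k ^+ n + (n - #|B|)%:R.
  rewrite (bigID (mem B)) /=; congr (_ + _).
    by apply: eq_bigr => k kB; rewrite /y kB.
  rewrite (eq_bigr (fun _ => 1)); last by move=> k /negbTE kB; rewrite /y kB.
  rewrite -card_setC_ord (eq_bigl (mem (~: B))); last by move=> k; rewrite !inE.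
  by rewrite sumr_const.
rewrite yP yS mulrC => H.
have yge0 : {in predT, forall i, 0 <= y i}.
  by move=> k _; rewrite /y; case: ifP => kB //; apply: exprn_ge0; apply: xge0.
have Pge0 : 0 <= \prod_(k in B) x k by apply: prodr_ge0.
have Sge0 : 0 <= n%:R^-1 * (\sum_(k in B) x k ^+ n + (n - #|B|)%:R).
  apply: mulr_ge0; first by rewrite invr_ge0.
  apply: addr_ge0 => //; apply: sumr_ge0 => k kB; apply: exprn_ge0; exact: xge0.
by rewrite -(ler_pXn2r n0) ?nnegrE // H.
Qed.

Lemma holder (R : realType) n (T : finType) (B : {set 'I_n}) (h : 'I_n -> T -> R)
  (S : 'I_n -> R) :
 (0 < n)%N -> (0 < #|T|)%N -> (forall k t, 0 <= h k t) -> (forall k, 0 <= S k) ->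
 (forall k, k \in B -> #|T|%:R^-1 * \sum_t h k t ^+ n = S k ^+ n) ->
 #|T|%:R^-1 * \sum_t \prod_(k in B) h k t <= \prod_(k in B) S k.
Proof.
move=> n0 T0 hge0 Sge0 hS.
have NT0 : (0 : R) < #|T|%:R by rewrite ltr0n.
case: (boolP [exists k in B, S k == 0]) => [/existsP [k /andP [kB /eqP Sk0]]|].
  have hk0 : forall t, h k t = 0.
    move=> t; have := hS k kB; rewrite Sk0 expr0n (gtn_eqF n0) mulr0n.
    move/eqP; rewrite mulf_eq0 invr_eq0 (gt_eqF NT0) /= => /eqP Hs.
    have := psumr_eq0P (fun t _ => exprn_ge0 n (hge0 k t)) Hs (i:=t) isT.
    by move/eqP; rewrite expf_eq0 n0 /= => /eqP.
  rewrite big1 ?mulr0; first by apply: prodr_ge0.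
  by move=> t _; rewrite (bigD1 k) //= hk0 mul0r.
rewrite negb_exists => /forallP Hn.
have Spos : forall k, k \in B -> 0 < S k.
  by move=> k kB; rewrite lt_def Sge0 andbT; move: (Hn k); rewrite kB.
have pt : forall t, \prod_(k in B) h k t <= \prod_(k in B) S k *
    (n%:R^-1 * (\sum_(k in B) (h k t / S k) ^+ n + (n - #|B|)%:R)).
  move=> t.
  have -> : \prod_(k in B) h k t = \prod_(k in B) S k * \prod_(k in B) (h k t / S k).
    rewrite -big_split /=; apply: eq_bigr => k kB.
    by rewrite mulrC divfK // gt_eqF // Spos.
  apply: ler_wpM2l; first by apply: prodr_ge0.
  apply: amgm => // k kB; apply: divr_ge0 => //.
have sumS : \sum_t (\sum_(k in B) (h k t / S k) ^+ n + (n - #|B|)%:R)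
    = #|T|%:R * n%:R.
  rewrite big_split /= exchange_big /=.
  rewrite (eq_bigr (fun _ => #|T|%:R)); last first.
    move=> k kB; have := hS k kB.
    under eq_bigr => t _ do rewrite expr_div_n.
    rewrite -mulr_suml => H.
    have Sn0 : S k ^+ n != 0 by rewrite expf_neq0 // gt_eqF // Spos.
    have H' : \sum_t h k t ^+ n = #|T|%:R * S k ^+ n.
      by rewrite -H mulrA divff ?mul1r // gt_eqF.
    by rewrite H' mulfK.
  have Bn : (#|B| <= n)%N by have := max_card (mem B); rewrite card_ord.
  rewrite !sumr_const -[_ *+ #|B|]mulr_natr -[_ *+ #|xpredT|]mulr_natr.
  have -> : #|[pred _ : T | true]| = #|T| by [].
  rewrite natrB //; ring.
apply: le_trans (_ : #|T|%:R^-1 * \sum_t (\prod_(k in B) S k *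
    (n%:R^-1 * (\sum_(k in B) (h k t / S k) ^+ n + (n - #|B|)%:R))) <= _).
  by apply: ler_wpM2l; [rewrite invr_ge0 ltW | apply: ler_sum => t _; apply: pt].
rewrite -mulr_sumr -mulr_sumr sumS.
have n0' : (n%:R : R) != 0 by rewrite pnatr_eq0 gtn_eqF.
have NT0' : (#|T|%:R : R) != 0 by rewrite gt_eqF.
set P := \prod_(k in B) S k.
suff -> : #|T|%:R^-1 * (P * (n%:R^-1 * (#|T|%:R * n%:R))) = P by [].
by field; rewrite n0' NT0'.
Qed.


Lemma rsignM (R : realType) a b : rsign R a * rsign R b = rsign R (a == b).
Proof. by case: a; case: b; rewrite /rsign /=; lra. Qed.

Lemma rsign_sq (R : realType) a : rsign R a * rsign R a = 1.
Proof. by rewrite rsignM eqxx. Qed.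

Lemma rs_pair (R : realType) (I : finType) (a b : I) :
  \sum_(e : {ffun I -> bool}) rsign R (e a) * rsign R (e b)
  = if a == b then #|{ffun I -> bool}|%:R else 0.
Proof.
case: eqP => [->|/eqP ab].
  by rewrite (eq_bigr (fun _ => 1)) ?sumr_const // => e _; rewrite rsign_sq.
pose fl (e : {ffun I -> bool}) := [ffun i => if i == a then ~~ e i else e i].
have flK : involutive fl.
  by move=> e; apply/ffunP => i; rewrite !ffunE; case: eqP => //; rewrite negbK.
set X := \sum_e _.
suff : X = - X by lra.
rewrite {1}/X (reindex_inj (can_inj flK)) /= -sumrN.
apply: eq_bigr => e _; rewrite /fl !ffunE eqxx eq_sym (negbTE ab).
by case: (e a); case: (e b); rewrite /rsign /=; lra.
Qed.

Lemma eta_prod (R : realType) n (I : finType) (q r : 'I_n -> I) :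
 \sum_(η : {ffun 'I_n -> {ffun I -> bool}})
    \prod_j (rsign R (η j (q j)) * rsign R (η j (r j)))
 = if [forall j, q j == r j] then (#|{ffun I -> bool}|%:R) ^+ n else 0.
Proof.
rewrite -(bigA_distr_bigA (fun j (e : {ffun I -> bool}) => rsign R (e (q j)) * rsign R (e (r j)))) /=.
under eq_bigr => j _ do rewrite rs_pair.
case: ifP => [/forallP H|/negbT].
  by rewrite (eq_bigr (fun _ => #|{ffun I -> bool}|%:R)) ?prodr_const ?card_ord // => j _; rewrite H.
by rewrite negb_forall => /existsP [j nj]; rewrite (bigD1 j) //= (negbTE nj) mul0r.
Qed.

Lemma marginal (R : realType) n (I : finType) (k j : 'I_n) (G : {ffun I -> bool} -> R) :
 j != k ->
 \sum_(η : {ffun 'I_n -> {ffun I -> bool}}) G [ffun i => η k i == η j i]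
 = (\sum_e G e) * \prod_(l | l != k) #|{ffun I -> bool}|%:R.
Proof.
move=> jk.
pose tau (η : {ffun 'I_n -> {ffun I -> bool}}) :=
  [ffun l => if l == k then [ffun i => η k i == η j i] else η l].
have tauK : involutive tau.
  move=> η; apply/ffunP => l; rewrite !ffunE.
  case: (l =P k) => [->|] //; apply/ffunP => i; rewrite !ffunE eqxx (negbTE jk).
  by rewrite ffunE; case: (η k i); case: (η j i).
rewrite [LHS](reindex_inj (can_inj tauK)) /=.
have -> : \sum_η G [ffun i => tau η k i == tau η j i] = \sum_(η : {ffun 'I_n -> {ffun I -> bool}}) \prod_l (if l == k then G (η l) else 1).
  apply: eq_bigr => η _; rewrite (bigD1 k) //= eqxx big1 ?mulr1; last first.
    by move=> l /negbTE ->.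
  congr G; apply/ffunP => i; rewrite /tau !ffunE eqxx (negbTE jk) !ffunE.
  by case: (η k i); case: (η j i).
rewrite -(bigA_distr_bigA (fun l (e : {ffun I -> bool}) => if l == k then G e else 1)) /=.
rewrite (bigD1 k) //= eqxx; congr (_ * _).
apply: eq_bigr => l /negbTE ->; by rewrite sumr_const.
Qed.

Lemma card_setC_ord' n (B : {set 'I_n}) : #|~: B| = (n - #|B|)%N.
Proof. by rewrite cardsCs finset.setCK card_ord. Qed.

Lemma count_perm (R : realType) n (P : {set 'I_n} -> R) : (forall A, 0 <= P A) ->
 \sum_(s : {perm 'I_n} | s != 1%g) P [set k | s k == k] <=
 \sum_(A : {set 'I_n} | (#|A| <= n - 2)%N) P A * ((n - #|A|)`!)%:R.
Proof.
move=> P0.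
rewrite (partition_big (fun s : {perm 'I_n} => [set k | s k == k]) xpredT) //=.
rewrite [X in X <= _](bigID (fun A : {set 'I_n} => (#|A| <= n - 2)%N)) /=.
rewrite [X in _ + X <= _]big1 ?addr0; last first.
  move=> A HA; apply: big1 => s /andP [s1 /eqP fs].
  exfalso; move/negP: HA; apply.
  have [x sx] : exists x, s x != x.
    apply/existsP; move: s1; apply: contraR; rewrite negb_exists => /forallP H.
    by apply/eqP/permP => x; rewrite perm1; move: (H x) => /negPn /eqP.
  have ssx : s (s x) != s x by apply: contra sx => /eqP /perm_inj ->.
  have sub : [set x; s x] \subset ~: A.
    apply/fintype.subsetP => y; rewrite !inE -fs !inE => /orP [] /eqP ->; by [].
  have := subset_leq_card sub; rewrite cards2 eq_sym sx card_setC_ord'.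
  move=> h; have h2 : (2 <= n - #|A|)%N by []; move: h2; set a := #|A|; move=> h2; lia.
apply: ler_sum => A HA.
rewrite (eq_bigr (fun _ => P A)); last by move=> s /andP [_ /eqP ->].
rewrite sumr_const -[P A *+ _]mulr_natr; apply: ler_wpM2l => //; rewrite ler_nat.
rewrite -card_setC_ord' -card_perm; apply: subset_leq_card.
apply/fintype.subsetP => s /andP [_ /eqP fs].
apply/fintype.subsetP => x; rewrite !inE -fs inE; by [].
Qed.


Lemma rad_pow (R : realType) (V : normedModType R) (I : finType) (x : I -> V) q :
  (0 < q)%N -> rad_moment x q ^+ q =
  (#|{ffun I -> bool}|%:R)^-1 * \sum_(eps : {ffun I -> bool}) `|\sum_(i : I) rsign R (eps i) *: x i| ^+ q.
Proof.
move=> q0; rewrite /rad_moment -powR_mulrn ?powR_ge0 // -powRrM mulVf ?powRr1 //.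
  apply: mulr_ge0; first by rewrite invr_ge0.
  by apply: sumr_ge0 => e _; apply: exprn_ge0.
by rewrite pnatr_eq0 gtn_eqF.
Qed.

Lemma rad_ge0 (R : realType) (V : normedModType R) (I : finType) (x : I -> V) q :
  0 <= rad_moment x q.
Proof. by rewrite /rad_moment powR_ge0. Qed.

Section Main.
Variables (R : realType) (p : nat) (E : 'I_p -> completeNormedModType R) (I : finType)
  (d : forall k : 'I_p, I -> E k).
Hypothesis hp : (2 <= p)%N.
Let p0 : (0 < p)%N := leq_trans (isT : (0 < 2)%N) hp.
Let k0 : 'I_p := Ordinal p0.
Let Tp := {ffun 'I_p -> {ffun I -> bool}}.
Let M : R := #|{ffun I -> bool}|%:R.
Let N : R := #|{ffun 'I_p -> {ffun I -> bool}}|%:R.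
Let sg (s : {perm 'I_p}) : R := (-1) ^+ odd_perm s.
Let cs (s : {perm 'I_p}) k : R := if k == k0 then - sg s / N else 1.
Let rr (s : {perm 'I_p}) (η : Tp) k i : R := rsign R (η k i) * rsign R (η ((s^-1)%g k) i).
Let Z s η k : E k := \sum_i rr s η k i *: d k i.
Let tt s η : etuple E := fun k => cs s k *: Z s η k.

Lemma M_gt0 : 0 < M.
Proof. by rewrite /M ltr0n card_ffun expn_gt0 card_bool. Qed.

Lemma N_eq : N = M ^+ p.
Proof. by rewrite /N /M card_ffun card_ord natrX. Qed.

Lemma N_gt0 : 0 < N.
Proof. by rewrite N_eq exprn_gt0 // M_gt0. Qed.

Lemma coef (g : {ffun 'I_p -> I}) :
  \sum_(s : {perm 'I_p} | s != 1%g) \sum_(η : Tp) \prod_k (cs s k * rr s η k (g k))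
  = 1 - (injectiveb g)%:R.
Proof.
have H1 : forall s, \sum_(η : Tp) \prod_k (cs s k * rr s η k (g k))
    = - sg s * ([forall j, g (s j) == g j])%:R.
  move=> s; under eq_bigr => η _ do rewrite big_split /=.
  have -> : \prod_k cs s k = - sg s / N.
    rewrite (bigD1 k0) //= big1 ?mulr1; first by rewrite /cs eqxx.
    by move=> k /negbTE kk; rewrite /cs kk.
  rewrite -mulr_sumr.
  have E1 : forall η : Tp, \prod_k rr s η k (g k) =
      \prod_j (rsign R (η j (g j)) * rsign R (η j (g (s j)))).
    move=> η; rewrite /rr big_split /= [X in _ * X](reindex_inj (@perm_inj _ s)) /=.
    by rewrite -big_split; apply: eq_bigr => j _; rewrite permK.
  under eq_bigr => η _ do rewrite E1.
  rewrite eta_prod.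
  have -> : [forall j, g j == g (s j)] = [forall j, g (s j) == g j].
    by apply/forallP/forallP => H j; rewrite eq_sym.
  have N0 : N != 0 by rewrite gt_eqF // N_gt0.
  case: ifP => _ /=; last by rewrite !mulr0.
  by rewrite -/M -N_eq mulr1 divfK.
under eq_bigr => s _ do rewrite H1.
have H2 : \sum_(s : {perm 'I_p}) sg s * ([forall j, g (s j) == g j])%:R = (injectiveb g)%:R.
  rewrite -(@sign_sum R p I g) [RHS]big_mkcond /=; apply: eq_bigr => s _.
  by case: ifP => _; rewrite ?mulr1 ?mulr0.
move: H2; rewrite (bigD1 1%g) //=.
have -> : [forall j, g ((1%g : {perm 'I_p}) j) == g j] by apply/forallP => j; rewrite perm1.
rewrite /sg odd_perm1 /= mulr1 => H2.
under eq_bigr => s _ do rewrite mulNr.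
rewrite sumrN -H2 expr0 /sg; ring.
Qed.


Let f k := \sum_i d k i.
Let u : tcomb E := (1, (fun k => f k) : etuple E) ::
     [seq (-1, (fun k : 'I_p => d k (g k)) : etuple E)
       | g : {ffun 'I_p -> I} <- enum [pred g : {ffun 'I_p -> I} | injectiveb g]].
Let sq : seq (etuple E) := flatten [seq [seq tt s η | η <- enum {ffun 'I_p -> {ffun I -> bool}}]
   | s <- enum [pred s : {perm 'I_p} | s != 1%g]].

Lemma teq : tensor_eq u [seq (1, t) | t <- sq].
Proof.
move=> phi Hphi.
rewrite big_cons /= !big_map big_flatten /= big_map.
symmetry; under eq_bigr => s _ do rewrite big_map big_enum /=.
symmetry; rewrite !big_enum /=.
have Ef : phi [eta f] = \sum_(g : {ffun 'I_p -> I}) phi (fun k => d k (g k)).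
  have -> : [eta f] = (fun k => \sum_i (fun _ _ => (1 : R)) k i *: d k i).
    by apply: functional_extensionality_dep => k; rewrite /f; apply: eq_bigr => i _; rewrite scale1r.
  rewrite (@ml_expand R p E phi Hphi I (fun _ _ => 1) d p0).
  by apply: eq_bigr => g _; rewrite big1 ?mul1r.
have Et : forall s η, phi (tt s η) = \sum_(g : {ffun 'I_p -> I})
     (\prod_k (cs s k * rr s η k (g k))) * phi (fun k => d k (g k)).
  move=> s η; rewrite -(@ml_expand R p E phi Hphi I (fun k i => cs s k * rr s η k i) d p0).
  congr phi; apply: functional_extensionality_dep => k.
  by rewrite /tt /Z scaler_sumr; apply: eq_bigr => i _; rewrite scalerA.
symmetry; under eq_bigr => s _ do under eq_bigr => η _ do rewrite mul1r Et.
rewrite Ef mul1r.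
under eq_bigr => s _ do rewrite exchange_big.
rewrite exchange_big /=.
under eq_bigr => g _ do under eq_bigr => s _ do rewrite -big_distrl /=.
under eq_bigr => g _ do rewrite -big_distrl /=.
under eq_bigr => g _ do rewrite coef mulrBl mul1r.
rewrite sumrB; congr (_ + _); rewrite -sumrN [RHS]big_mkcond /=.
by apply: eq_bigr => g _; rewrite inE; case: (injectiveb g); rewrite /= ?mul1r ?mulN1r ?mul0r ?oppr0.
Qed.

Let S k := rad_moment (d k) p.
Let P (A : {set 'I_p}) := (\prod_(k in A) `|f k|) * \prod_(k in ~: A) S k.

Lemma mom_k (s : {perm 'I_p}) k : s k != k ->
  N^-1 * \sum_(η : Tp) `|Z s η k| ^+ p = S k ^+ p.
Proof.
move=> sk.
set j := (s^-1)%g k.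
have jk : j != k.
  apply: contra sk => /eqP jk; apply/eqP.
  by rewrite -{1}jk /j permKV.
have -> : \sum_(η : Tp) `|Z s η k| ^+ p =
   \sum_(η : {ffun 'I_p -> {ffun I -> bool}})
     (fun e : {ffun I -> bool} => `|\sum_i rsign R (e i) *: d k i| ^+ p)
       [ffun i => η k i == η j i].
  apply: eq_bigr => η _ /=; congr (`|_| ^+ p); apply: eq_bigr => i _.
  by rewrite ffunE /rr rsignM.
rewrite (@marginal R p I k j (fun e : {ffun I -> bool} => `|\sum_i rsign R (e i) *: d k i| ^+ p) jk) /S rad_pow // -/M.
have -> : N = M * \prod_(l | l != k) M.
  have -> : N = \prod_(l : 'I_p) M by rewrite prodr_const card_ord N_eq.
  by rewrite (bigD1 k).
have Q0 : \prod_(l | l != k) M != 0.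
  by apply/prodf_neq0 => l _; rewrite gt_eqF // M_gt0.
have M0 : M != 0 by rewrite gt_eqF // M_gt0.
move: Q0 M0; set Q := \prod_(l | l != k) M; set X := \sum_e _ => Q0 M0.
by field; rewrite Q0 M0.
Qed.

Lemma per_s (s : {perm 'I_p}) :
  N^-1 * \sum_(η : Tp) \prod_k `|Z s η k| <= P [set k | s k == k].
Proof.
set A := [set k | s k == k].
have ZA : forall η k, k \in A -> Z s η k = f k.
  move=> η k; rewrite inE => /eqP sk.
  have sk' : (s^-1)%g k = k by rewrite -{1}sk permK.
  by rewrite /Z /rr sk' /f; apply: eq_bigr => i _; rewrite rsign_sq scale1r.
have -> : \sum_(η : Tp) \prod_k `|Z s η k| =
    \sum_(η : Tp) (\prod_(k in A) `|f k|) * \prod_(k in ~: A) `|Z s η k|.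
  apply: eq_bigr => η _; rewrite (bigID (mem A)) /=; congr (_ * _).
    by apply: eq_bigr => k kA; rewrite ZA.
  by apply: eq_bigl => k; rewrite !inE.
rewrite -mulr_sumr mulrCA /P; apply: ler_wpM2l.
  by apply: prodr_ge0 => k _.
have := @holder R p Tp (~: A) (fun k η => `|Z s η k|) S p0.
apply.
- by rewrite card_ffun expn_gt0 card_ffun expn_gt0 card_bool.
- by move=> k η.
- by move=> k; apply: rad_ge0.
move=> k; rewrite !inE => sk; exact: mom_k.
Qed.

Lemma cost_bound : \sum_(t <- sq) \prod_k `|t k| <=
  \sum_(A : {set 'I_p} | (#|A| <= p - 2)%N)
       (\prod_(k in A) `|f k|) * (\prod_(k in ~: A) S k) * ((p - #|A|)`!)%:R.
Proof.
rewrite big_flatten /= big_map.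
under eq_bigr => s _ do rewrite big_map big_enum /=.
rewrite big_enum /=.
apply: le_trans (_ : \sum_(s : {perm 'I_p} | s != 1%g) P [set k | s k == k] <= _); last first.
  by apply: count_perm => A; apply: mulr_ge0; apply: prodr_ge0 => k _; rewrite ?rad_ge0.
rewrite (eq_bigl (fun s : {perm 'I_p} => s != 1%g)) //.
apply: ler_sum => s _; apply: le_trans (per_s s).
rewrite mulr_sumr le_eqVlt; apply/orP; left; apply/eqP.
apply: eq_bigr => η _.
have cs0 : \prod_k `|cs s k| = N^-1.
  rewrite (bigD1 k0) //= big1 ?mulr1; last by move=> k /negbTE kk; rewrite /cs kk normr1.
  rewrite /cs eqxx normrM normrN normrV ?unitfE ?gt_eqF ?N_gt0 //.
  by rewrite /sg normrX normrN1 expr1n mul1r ger0_norm // ltW // N_gt0.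
by rewrite -cs0 -big_split /=; apply: eq_bigr => k _; rewrite /tt normrZ.
Qed.

Lemma main_ineq : projnorm u <=
  \sum_(A : {set 'I_p} | (#|A| <= p - 2)%N)
       (\prod_(k in A) `|f k|) * (\prod_(k in ~: A) S k) * ((p - #|A|)`!)%:R.
Proof.
apply: le_trans (cost_bound); rewrite /projnorm.
apply: ge_inf.
  exists 0 => r [s' [_ ->]]; apply: sumr_ge0 => t _; apply: prodr_ge0 => k _.
  by [].
exists sq; split => //; exact: teq.
Qed.
End Main.

Theorem theorem5p1 (R : realType) (p : nat) (E : 'I_p -> completeNormedModType R)
  (I : finType) (d : forall k : 'I_p, I -> E k) :
  (2 <= p)%N ->
  let f := fun k : 'I_p => \sum_(i : I) d k i in
  let S := fun k : 'I_p => rad_moment (d k) p in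
  projnorm ((1, (fun k : 'I_p => f k) : etuple E) ::
            [seq (-1, (fun k : 'I_p => d k (g k)) : etuple E)
               | g : {ffun 'I_p -> I} <- enum [pred g : {ffun 'I_p -> I} | injectiveb g]])
  <= \sum_(A : {set 'I_p} | (#|A| <= p - 2)%N)
       (\prod_(k in A) `|f k|) * (\prod_(k in ~: A) S k) * ((p - #|A|)`!)%:R.
Proof.
move=> hp.
exact (@main_ineq R p E I d hp).
Qed.
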